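(* Let $\mathcal{A}$ be a strong $T_0$-family and let $\|x\|_{2,\mathcal{A}}=\|x\|_2+\|x\|_\mathcal{A}$ for $x\in\ell_2(\omega_1)$. Then the space $(\ell_2(\omega_1),\|\cdot\|_{2,\mathcal{A}})$ does not contain any uncountable equilateral set.
   Context: $\|\cdot\|_2$ is the Hilbert norm of $\ell_2(\omega_1)$ and $\|x\|_\mathcal{A}=\sup_{A\in\mathcal{A}}\sqrt{\sum_{\alpha\in A}x(\alpha)^2}$; $\|\cdot\|_{2,\mathcal{A}}$ is an equivalent norm on $\ell_2(\omega_1)$. A set $\mathcal{Y}$ is equilateral if there is $\delta>0$ with $\|y-y'\|=\delta$ for all distinct $y,y'\in\mathcal{Y}$. For disjoint $A,B$, $A\otimes B=\{\{\alpha,\beta\}:\alpha\in A,\beta\in B\}$. A function $c=(c_0,c_1):[\omega_1]^2\to I\times J$ ($0,1\in I$, $J\ne\emptyset$) is a $T$-coloring if for every uncountable pairwise disjoint family $\{\{a_\xi(0),a_\xi(1)\}:\xi<\omega_1\}$ of pairs and all $(i_0,j_0),(i_1,j_1)\in I\times J$ there are $\xi<\eta$ with $c(\{a_\xi(0),a_\eta(0)\})=(i_0,j_0)$, $c(\{a_\xi(1),a_\eta(1)\})=(i_1,j_1)$; it is a strong $T$-coloring if moreover for every uncountable pairwise disjoint family $\{A_\xi:\xi<\omega_1\}$ of finite subsets of $\omega_1$ there are $\xi<\eta$ with $c_0[A_\xi\otimes A_\eta]=\{0\}$ and $\xi<\eta$ with $c_0[A_\xi\otimes A_\eta]=\{1\}$.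 A strong $T_0$-family is $\mathcal{A}_c=\{a\subseteq\omega_1\text{ finite}:c_0[[a]^2]\subseteq\{0\}\}$ for a strong $T$-coloring $c$. *)

(* Defs.v *)
From HB Require Import structures.
From mathcomp Require Import all_boot all_order all_algebra.
From mathcomp Require Import all_classical all_reals ereal esum.
Set Implicit Arguments. Unset Strict Implicit. Unset Printing Implicit Defensive.
Import Order.TTheory GRing.Theory Num.Theory.
Local Open Scope classical_set_scope.
Local Open Scope ring_scope.

(* omega_1, characterised up to isomorphism: an uncountable well-order  *)
(* all of whose proper initial segments are countable.                  *)
Definition is_omega1 (d : Order.disp_t) (W : orderType d) : Prop :=
  well_founded (fun a b : W => (a < b)%O) /\
  ~ countable [set: W] /\
  (forall b : W, countable [set a : W | (a < b)%O]).

(* colorings of [W]^2 are represented by their values on pairs a < b.   *)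
Definition pcol (d : Order.disp_t) (W : orderType d) (K : Type)
  (c : W -> W -> K) (a b : W) : K :=
  if (a < b)%O then c a b else c b a.

(* T-coloring c = (c_0, c_1) : [W]^2 -> I x J, with 0 = i0, 1 = i1. *)
Definition T_coloring (d : Order.disp_t) (W : orderType d) (I J : Type)
  (c : W -> W -> I * J) : Prop :=
  forall (a0 a1 : W -> W),
    (forall xi, (a0 xi < a1 xi)%O) ->
    (forall xi eta, xi <> eta ->
       [set a0 xi; a1 xi] `&` [set a0 eta; a1 eta] = set0) ->
    forall (p0 p1 : I * J), exists xi eta : W, (xi < eta)%O /\
      pcol c (a0 xi) (a0 eta) = p0 /\ pcol c (a1 xi) (a1 eta) = p1.

Definition c0_image (d : Order.disp_t) (W : orderType d) (I J : Type)
  (c : W -> W -> I * J) (A B : set W) : set I :=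
  [set (pcol c a b).1 | a in A & b in B].

Definition strong_T_coloring (d : Order.disp_t) (W : orderType d) (I J : Type)
  (i0 i1 : I) (c : W -> W -> I * J) : Prop :=
  T_coloring c /\
  forall (A : W -> set W),
    (forall xi, finite_set (A xi)) ->
    (forall xi, A xi !=set0) ->
    (forall xi eta, xi <> eta -> A xi `&` A eta = set0) ->
    (exists xi eta : W, (xi < eta)%O /\ c0_image c (A xi) (A eta) = [set i0]) /\
    (exists xi eta : W, (xi < eta)%O /\ c0_image c (A xi) (A eta) = [set i1]).

Definition T0_family (d : Order.disp_t) (W : orderType d) (I J : Type)
  (i0 : I) (c : W -> W -> I * J) : set (set W) :=
  [set a | finite_set a /\
     forall x y, a x -> a y -> x <> y -> (pcol c x y).1 = i0].

Definition l2 (R : realType) (T : choiceType) : set (T -> R) :=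
  [set x | (\esum_(i in [set: T]) ((x i ^+ 2)%:E) < +oo)%E].

Definition norm2 (R : realType) (T : choiceType) (x : T -> R) : R :=
  Num.sqrt (fine (\esum_(i in [set: T]) ((x i ^+ 2)%:E))).

Definition normA (R : realType) (T : choiceType) (F : set (set T)) (x : T -> R) : R :=
  sup [set Num.sqrt (fine (\esum_(i in A) ((x i ^+ 2)%:E))) | A in F].

Definition norm2A (R : realType) (T : choiceType) (F : set (set T)) (x : T -> R) : R :=
  norm2 x + normA F x.

(* Main.v *)
Require Import Defs.
From HB Require Import structures.
From mathcomp Require Import all_boot all_order all_algebra.
From mathcomp Require Import all_classical all_reals ereal esum.
From mathcomp Require Import ring lra.
Import Order.TTheory GRing.Theory Num.Theory.
Local Open Scope classical_set_scope.
Set Implicit Arguments. Unset Strict Implicit. Unset Printing Implicit Defensive.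

Lemma countableU2 T (A B : set T) : countable A -> countable B -> countable (A `|` B).
Proof.
move=> cA cB; apply: (@sub_countable _ _ _ (\bigcup_(i in [set: bool]) (if i then A else B))).
  by apply: subset_card_le => x [Ax|Bx]; [exists true|exists false].
by apply: bigcup_countable => // -[].
Qed.

Lemma uncount_ex T (A : set T) : ~ countable A -> exists x, A x.
Proof.
move=> cA; apply: contra_notP cA => nA.
have -> : A = set0 by apply/seteqP; split => x // Ax; case: nA; exists x.
exact: countable0.
Qed.

Lemma uncount_two T (A : set T) : ~ countable A -> exists x y, A x /\ A y /\ x <> y.
Proof.
move=> cA; have [x Ax] := uncount_ex cA.
have : ~ countable (A `\ x).
  move=> c; apply: cA; apply: (@sub_countable _ _ _ (A `\ x `|` [set x])).
    by apply: subset_card_le => y Ay; have [->|yx] := pselect (y = x); [right|left].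
  by apply: countableU2 => //; exact: countable1.
move=> /uncount_ex [y [Ay yx]]; exists x, y; split => //; split => // e.
by apply: yx; rewrite e.
Qed.

Lemma pigeon T I (D : set I) (U : set T) (F : I -> set T) :
  countable D -> ~ countable U -> U `<=` \bigcup_(i in D) F i ->
  exists i, D i /\ ~ countable (U `&` F i).
Proof.
move=> cD cU UF; apply: contra_notP cU => H.
apply: (@sub_countable _ _ _ (\bigcup_(i in D) (U `&` F i))).
  apply: subset_card_le => x Ux; have [i Di Fix] := UF x Ux; by exists i.
apply: bigcup_countable => // i Di; apply: contra_notP H => c; by exists i.
Qed.

Lemma pigeon_fun T (C : countType) (U : set T) (f : T -> C) :
  ~ countable U -> exists c, ~ countable (U `&` [set x | f x = c]).
Proof.
move=> cU; have [|c [_ H]] := @pigeon T C setT U (fun c => [set x | f x = c]) (countableP _) cU.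
  by move=> x _; exists (f x).
by exists c.
Qed.

Section Free.
Variables (d : Order.disp_t) (W : orderType d).
Hypothesis HW : is_omega1 W.

Lemma free (T : Type) (U : set T) (N : T -> set T) :
  ~ countable U -> (forall x, countable (N x)) ->
  exists g : W -> T, (forall a, U (g a)) /\
    (forall a b, (a < b)%O -> g b <> g a /\ ~ N (g a) (g b)).
Proof.
move=> cU cN; have [x0 _] := uncount_ex cU.
have [wf [_ cseg]] := HW.
pose P (a : W) (rec : forall b : W, (b < a)%O -> T) (x : T) :=
  U x /\ forall b (h : (b < a)%O), x <> rec b h /\ ~ N (rec b h) x.
pose step (a : W) (rec : forall b : W, (b < a)%O -> T) : T :=
  match pselect (exists x, P a rec x) with
  | left h => proj1_sig (cid h) | right _ => x0 end.
pose g := Fix wf (fun _ => T) step.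
have gE a : g a = step a (fun b _ => g b).
  rewrite /g Fix_eq // => a' f f' H.
  have -> : f = f' by apply: functional_extensionality_dep => b;
    apply: functional_extensionality_dep => h; exact: H.
  by [].
have ex a : exists x, P a (fun b _ => g b) x.
  pose E := \bigcup_(b in [set b | (b < a)%O]) ([set g b] `|` N (g b)).
  have cE : countable E.
    apply: bigcup_countable => // b _; apply: countableU2; [exact: countable1|exact: cN].
  have : ~ countable (U `\` E).
    move=> c; apply: cU; apply: (@sub_countable _ _ _ ((U `\` E) `|` E)).
      by apply: subset_card_le => y Uy; have [Ey|nEy] := pselect (E y); [right|left].
    by apply: countableU2.
  move=> /uncount_ex [x [Ux nEx]]; exists x; split => // b h; split.
    by move=> xg; apply: nEx; exists b => //; left.
  by move=> Nx; apply: nEx; exists b => //; right.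
have Pg a : P a (fun b _ => g b) (g a).
  rewrite [X in P _ _ X]gE /step; case: pselect => [h|/(_ (ex a))//].
  exact: (proj2_sig (cid h)).
exists g; split => [a|a b ab]; first by case: (Pg a).
by case: (Pg b) => _ /(_ a ab).
Qed.

Lemma free_inj (T : Type) (g : W -> T) :
  (forall a b, (a < b)%O -> g b <> g a) -> ~ countable (range g).
Proof.
move=> H /countable_injP [f fi].
have [_ [cW _]] := HW; apply: cW; apply/countable_injP; exists (f \o g) => a b _ _ /=.
move=> /fi; rewrite !inE => /(_ (ex_intro2 _ _ a I erefl) (ex_intro2 _ _ b I erefl)) e.
have [ab|ba|//] := ltgtP a b.
- by case: (H _ _ ab).
- by case: (H _ _ ba).
Qed.


Lemma delta (T : Type) (n : nat) (U : set T) (S : T -> seq W) :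
  ~ countable U -> (forall x, U x -> uniq (S x) /\ (size (S x) <= n)%N) ->
  exists (D : set W) (U' : set T), U' `<=` U /\ ~ countable U' /\
    forall x y, U' x -> U' y -> x <> y -> [set` S x] `&` [set` S y] = D.
Proof.
elim: n U S => [|n IH] U S cU HS.
  exists set0, U; split => //; split => // x y Ux Uy _.
  have -> : S x = [::] by case: (HS x Ux) => _; case: (S x).
  by apply/seteqP; split => i [].
case: (pselect (exists p, ~ countable (U `&` [set x | p \in S x]))) => [[p cp]|np].
  have [] := IH (U `&` [set x | p \in S x]) (fun x => rem p (S x)) cp.
    move=> x [Ux px]; have [uS sS] := HS x Ux; split; first exact: rem_uniq.
    by rewrite size_rem //; move: sS; case: (size (S x)).
  move=> D [U' [sub [cU' HD]]]; exists (D `|` [set p]), U'; split.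
    by move=> x /sub [].
  split => // x y Ux Uy xy; rewrite -(HD x y Ux Uy xy).
  have [[Ux' px] [Uy' py]] := (sub x Ux, sub y Uy).
  have [ux _] := HS x Ux'; have [uy _] := HS y Uy'.
  apply/seteqP; split => i /=.
    move=> [ix iy]; have [->|ip] := eqVneq i p; first by right.
    by left; rewrite !mem_rem_uniq // !inE ip ix iy.
  move=> [[]|->]; last by split.
  by rewrite !mem_rem_uniq // !inE => /andP [_ ->] /andP [_ ->].
have np' p : countable (U `&` [set x | p \in S x]).
  by apply: contra_notP np => c; exists p.
pose N x := U `&` [set y | has (fun p => p \in S y) (S x)].
have cN x : countable (N x).
  apply: (@sub_countable _ _ _ (\bigcup_(p in [set` S x]) (U `&` [set y | p \in S y]))).
    apply: subset_card_le => y [Uy /hasP [p px py]]; by exists p.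
  by apply: bigcup_countable => //; apply: finite_set_countable.
have [g [Ug Hg]] := free cU cN.
exists set0, (range g); split; first by move=> _ [a _ <-].
split; first by apply: free_inj => a b /Hg [].
move=> _ _ [a _ <-] [b _ <-] gab.
have key : forall a b, (a < b)%O -> [set` S (g a)] `&` [set` S (g b)] = set0.
  move=> a' b' ab; have [_ nN] := Hg _ _ ab.
  apply/seteqP; split => i // [ia ib]; apply: nN; split => //.
  by apply/hasP; exists i.
have [ab|ba|e] := ltgtP a b.
- exact: key.
- by rewrite setIC; exact: key.
- by rewrite e in gab.
Qed.

End Free.

Local Open Scope ring_scope.

Section An.
Variables (R : realType) (T : choiceType).
Implicit Types (f g h : T -> R) (S A B : set T).

Local Open Scope ereal_scope.
Lemma esum_sub S A (f : T -> \bar R) : (forall i, 0 <= f i) -> S `<=` A ->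
  \esum_(i in S) f i <= \esum_(i in A) f i.
Proof.
move=> f0 SA; rewrite (esum_mkcond S) (esum_mkcond A); apply: le_esum => i _.
case: ifPn => iS; first by rewrite ifT // inE; apply: SA; rewrite -inE.
by case: ifP.
Qed.

Lemma esum_lin_le S f g h (c1 c2 : R) : (0 <= c1)%R -> (0 <= c2)%R ->
  (forall i, 0 <= (g i)%:E) -> (forall i, 0 <= (h i)%:E) ->
  (forall i, S i -> (f i <= c1 * g i + c2 * h i)%R) ->
  \esum_(i in S) (f i)%:E <= c1%:E * (\esum_(i in S) (g i)%:E) + c2%:E * (\esum_(i in S) (h i)%:E).
Proof.
move=> c10 c20 g0 h0 fle; apply: ge_ereal_sup => _ [A [finA AS] <-].
apply: (@le_trans _ _ (\sum_(i \in A) ((c1 * g i + c2 * h i)%R)%:E)).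
  by apply: lee_fsum => // i /AS /fle; rewrite lee_fin.
rewrite fsumEFin // fsbig_split // -!mulr_fsumr EFinD !EFinM.
apply: leeD; apply: lee_wpmul2l => //;
  rewrite -fsumEFin //; apply: ereal_sup_ubound; exists A => //.
Qed.

Local Close Scope ereal_scope.
Definition sq (x : T -> R) (S : set T) : R := fine (\esum_(i in S) (x i ^+ 2)%:E).

Lemma sq_ge0 x S : 0 <= sq x S.
Proof. by apply: fine_ge0; apply: esum_ge0 => i _; rewrite lee_fin sqr_ge0. Qed.

Lemma esum_sq_fin x S : @l2 R T x -> \esum_(i in S) (x i ^+ 2)%:E = (sq x S)%:E.
Proof.
move=> lx; rewrite /sq fineK //; apply/fin_numPlt/andP; split.
  by apply: (@lt_le_trans _ _ 0%E) => //; apply: esum_ge0 => i _; rewrite lee_fin sqr_ge0.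
apply: le_lt_trans lx; apply: esum_sub => // i; by rewrite ?lee_fin ?sqr_ge0.
Qed.

Lemma sq_sub x S A : @l2 R T x -> S `<=` A -> sq x S <= sq x A.
Proof.
move=> lx SA; rewrite -lee_fin -!esum_sq_fin //; apply: esum_sub => // i.
by rewrite lee_fin sqr_ge0.
Qed.

Lemma sq_split x S B : @l2 R T x -> sq x S = sq x (S `&` B) + sq x (S `&` ~` B).
Proof.
move=> lx; apply/eqP; rewrite -(@eqe R) EFinD -!esum_sq_fin //.
by rewrite (esumID B) // => i _; rewrite lee_fin sqr_ge0.
Qed.

Lemma sq_lin x y z S (c1 c2 : R) : @l2 R T y -> @l2 R T z -> 0 <= c1 -> 0 <= c2 ->
  (forall i, S i -> x i ^+ 2 <= c1 * y i ^+ 2 + c2 * z i ^+ 2) ->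
  sq x S <= c1 * sq y S + c2 * sq z S.
Proof.
move=> ly lz c10 c20 H.
have := @esum_lin_le S (fun i => x i ^+ 2) (fun i => y i ^+ 2) (fun i => z i ^+ 2) c1 c2 c10 c20.
have g0 : forall (u : T -> R) i, (0 <= ((u i)^+2)%:E)%E by move=> u i; rewrite lee_fin sqr_ge0.
move=> /(_ (g0 y) (g0 z) H); rewrite (esum_sq_fin _ ly) (esum_sq_fin _ lz) => Hle.
rewrite /sq; move: Hle; rewrite -!EFinM -EFinD.
case E: (\esum_(i in S) (x i ^+ 2)%:E) => [r| |] //=.
move=> _; rewrite -/(sq y S) -/(sq z S); apply: addr_ge0; apply: mulr_ge0 => //; exact: sq_ge0.
Qed.

Lemma l2_lin x y z (c1 c2 : R) : @l2 R T y -> @l2 R T z -> 0 <= c1 -> 0 <= c2 ->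
  (forall i, x i ^+ 2 <= c1 * y i ^+ 2 + c2 * z i ^+ 2) -> @l2 R T x.
Proof.
move=> ly lz c10 c20 H.
have := @esum_lin_le setT (fun i => x i ^+ 2) (fun i => y i ^+ 2) (fun i => z i ^+ 2) c1 c2 c10 c20.
have g0 : forall (u : T -> R) i, (0 <= ((u i)^+2)%:E)%E by move=> u i; rewrite lee_fin sqr_ge0.
move=> /(_ (g0 y) (g0 z) (fun i _ => H i)); rewrite (esum_sq_fin _ ly) (esum_sq_fin _ lz) => Hle.
rewrite /l2 /=; apply: le_lt_trans Hle _; rewrite -!EFinM -EFinD; exact: ltry.
Qed.

Lemma sq_set1 x i : sq x [set i] = x i ^+ 2.
Proof. by rewrite /sq esum_set1 // lee_fin sqr_ge0. Qed.

Lemma sq_zero x S : (forall i, S i -> x i = 0) -> sq x S = 0.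
Proof. by move=> H; rewrite /sq esum1 // => i /H ->; rewrite expr0n. Qed.

Lemma sq_approx x (e : R) : @l2 R T x -> 0 < e -> exists s : seq T, sq x (~` [set` s]) <= e.
Proof.
move=> lx e0.
have : ((sq x setT - e)%:E < \esum_(i in setT) (x i ^+ 2)%:E)%E.
  by rewrite esum_sq_fin // lte_fin ltrBlDr ltrDl.
move=> /ereal_sup_gt [_ [A [finA _] <-] lt].
have [s As] := (proj1 (finite_seqP A)) finA.
exists s; rewrite -As.
have := sq_split setT A lx; rewrite !setTI => E.
have : ((sq x setT - e)%:E < (sq x A)%:E)%E.
  by rewrite -esum_sq_fin // esum_fset // => i _; rewrite lee_fin sqr_ge0.
rewrite lte_fin; lra.
Qed.


Lemma sq_union x A B : @l2 R T x -> sq x (A `|` B) <= sq x A + sq x B.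
Proof.
move=> lx; rewrite (sq_split _ A lx); apply: lerD; apply: sq_sub => //.
  by move=> i [] [].
Qed.

Lemma sq_seq x (s : seq T) c : @l2 R T x -> (forall i, i \in s -> x i ^+ 2 <= c) ->
  sq x [set` s] <= (size s)%:R * c.
Proof.
move=> lx; elim: s => [|a s IH] H.
  by rewrite sq_zero // mul0r.
apply: (@le_trans _ _ (sq x ([set a] `|` [set` s]))).
  apply: sq_sub => // i /=; rewrite inE => /orP [/eqP ->|]; [by left| by right].
apply: le_trans (sq_union _ _ lx) _; rewrite sq_set1 /= -[(size s).+1]add1n natrD mulrDl mul1r. 
apply: lerD; first by apply: H; rewrite inE eqxx.
by apply: IH => i iS; apply: H; rewrite inE iS orbT.
Qed.

Definition Gsup (F : set (set T)) (h : set T -> R) : R := sup [set Num.sqrt (h A) | A in F].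

Lemma Gsup_ge (F : set (set T)) (h : set T -> R) (b : R) (A : set T) : (forall A, F A -> h A <= b) -> F A -> Num.sqrt (h A) <= Gsup F h.
Proof.
move=> hb FA; apply: ub_le_sup; last by exists A.
exists (Num.sqrt b) => _ [A' FA' <-]; rewrite ler_wsqrtr //; exact: hb.
Qed.

Lemma Gsup_le (F : set (set T)) (h : set T -> R) (b : R) (A0 : set T) : F A0 -> (forall A, F A -> h A <= b) -> Gsup F h <= Num.sqrt b.
Proof.
move=> FA0 hb; apply: ge_sup; first by exists (Num.sqrt (h A0)), A0.
by move=> _ [A' FA' <-]; rewrite ler_wsqrtr //; exact: hb.
Qed.

Lemma Gsup_adh (F : set (set T)) (h : set T -> R) (b : R) (A0 : set T) (t : R) : F A0 -> (forall A, F A -> h A <= b) -> 0 < t ->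
  exists A, F A /\ Gsup F h - t < Num.sqrt (h A).
Proof.
move=> FA0 hb t0.
have hs : has_sup [set Num.sqrt (h A) | A in F].
  split; first by exists (Num.sqrt (h A0)), A0.
  exists (Num.sqrt b) => _ [A' FA' <-]; rewrite ler_wsqrtr //; exact: hb.
by have [_ [A FA <-] lt] := sup_adherent t0 hs; exists A.
Qed.

End An.


Lemma tri_sq (R : realType) (u v z t : R) : 0 < t -> `|u| <= `|v| + `|z| ->
  u ^+ 2 <= (1 + t) * v ^+ 2 + (1 + t^-1) * z ^+ 2.
Proof.
move=> t0 H.
have h1 : u ^+ 2 <= (`|v| + `|z|) ^+ 2.
  by rewrite -(real_normK (num_real u)); apply: lerXn2r => //; rewrite ?nnegrE.
apply: le_trans h1 _.
rewrite -[v ^+ 2](real_normK (num_real v)) -[z ^+ 2](real_normK (num_real z)).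
set a := `|v|; set b := `|z|.
have ti : t * t^-1 = 1 by rewrite mulfV // gt_eqF.
have : 0 <= t^-1 * (t * a - b) ^+ 2 by apply: mulr_ge0; [rewrite invr_ge0 ltW|exact: sqr_ge0].
have -> : t^-1 * (t * a - b) ^+ 2 = t * a ^+ 2 - 2 * a * b + t^-1 * b ^+ 2.
  by field; rewrite gt_eqF.
move=> h; rewrite sqrrD; lra.
Qed.

Section Pair.
Variables (R : realType) (d : Order.disp_t) (W : orderType d).

Lemma sq_tri (p q r : W -> R) S t : @l2 R W q -> @l2 R W r -> 0 < t ->
  (forall i, S i -> `|p i| <= `|q i| + `|r i|) ->
  sq p S <= (1 + t) * sq q S + (1 + t^-1) * sq r S.
Proof.
move=> lq lr t0 H; apply: sq_lin => //.
- by rewrite addr_ge0 // ltW.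
- by rewrite addr_ge0 // invr_ge0 ltW.
- by move=> i Si; apply: tri_sq => //; exact: H.
Qed.

Lemma l2B (x y : W -> R) : @l2 R W x -> @l2 R W y -> @l2 R W (x \- y).
Proof.
move=> lx ly; apply: (@l2_lin _ _ _ x y 2 2) => // i.
have := @tri_sq R (x i - y i) (x i) (y i) 1 ltr01.
rewrite invr1 => -> //; rewrite (le_trans (ler_normB _ _)) //.
Qed.

Lemma sq4 (w : W -> R) (A X Y : set W) : @l2 R W w ->
  sq w A = sq w (A `&` X `&` Y) + sq w (A `&` X `&` ~` Y) + sq w (A `&` ~` X `&` Y)
         + sq w (A `&` ~` X `&` ~` Y).
Proof.
move=> lw; rewrite (sq_split A X lw) (sq_split (A `&` X) Y lw) (sq_split (A `&` ~` X) Y lw).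
by rewrite !addrA.
Qed.


Variables (I J : Type) (i0 : I) (c : W -> W -> I * J).
Variables (x y : W -> R) (Sx Sy D : set W) (t e2 eD : R).
Hypotheses (lx : @l2 R W x) (ly : @l2 R W y) (t0 : 0 < t)
  (ex : sq x (~` Sx) <= e2) (ey : sq y (~` Sy) <= e2) (HD : Sx `&` Sy = D)
  (eDb : sq (x \- y) D <= eD).

Let w := x \- y.
Let lw : @l2 R W w. Proof. exact: l2B. Qed.
Let Fx := Sx `&` ~` Sy.
Let Fy := Sy `&` ~` Sx.
Let E := (1 + t^-1) * e2.
Let nw i : `|w i| <= `|x i| + `|y i|. Proof. exact: ler_normB. Qed.
Let nx i : `|x i| <= `|w i| + `|y i|.
Proof. by have := ler_normD (w i) (y i); rewrite /w /= subrK. Qed.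
Let ny i : `|y i| <= `|w i| + `|x i|.
Proof. by have := ler_normB (x i) (w i); rewrite /w /= opprB addrC subrK addrC. Qed.
Let E0 : 0 <= e2. Proof. by apply: le_trans ex; exact: sq_ge0. Qed.

Let bx A : A `<=` ~` Sx -> sq x A <= e2.
Proof. by move=> H; apply: le_trans ex; exact: sq_sub. Qed.
Let by_ A : A `<=` ~` Sy -> sq y A <= e2.
Proof. by move=> H; apply: le_trans ey; exact: sq_sub. Qed.

Let T4b A : sq w (A `&` ~` Sx `&` ~` Sy) <= 4 * e2.
Proof.
apply: le_trans (sq_tri (p:=w) (S:=A `&` ~` Sx `&` ~` Sy) lx ly ltr01 (fun i _ => nw i)) _.
rewrite invr1.
have : sq x (A `&` ~` Sx `&` ~` Sy) <= e2 by apply: bx => i [[]].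
have : sq y (A `&` ~` Sx `&` ~` Sy) <= e2 by apply: by_ => i [].
lra.
Qed.

Let T1b A : sq w (A `&` Sx `&` Sy) <= eD.
Proof. by apply: le_trans eDb; apply: sq_sub => // i [[_ ?] ?]; rewrite -HD. Qed.

Let T2b A : sq w (A `&` Sx `&` ~` Sy) <= (1 + t) * sq x (A `&` Fx) + E.
Proof.
have -> : A `&` Sx `&` ~` Sy = A `&` Fx by rewrite /Fx setIA.
apply: le_trans (sq_tri (p:=w) (S:=A `&` Fx) lx ly t0 (fun i _ => nw i)) _; rewrite lerD2l /E ler_wpM2l //.
  by rewrite addr_ge0 // invr_ge0 ltW.
by apply: by_ => i [_ []].
Qed.

Let T3b A : sq w (A `&` ~` Sx `&` Sy) <= (1 + t) * sq y (A `&` Fy) + E.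
Proof.
have -> : A `&` ~` Sx `&` Sy = A `&` Fy by rewrite /Fy -setIA [~` Sx `&` Sy]setIC.
apply: le_trans (sq_tri (p:=w) (S:=A `&` Fy) ly lx t0 (fun i _ => ltac:(rewrite addrC; exact: nw i))) _.
rewrite lerD2l /E ler_wpM2l //.
  by rewrite addr_ge0 // invr_ge0 ltW.
by apply: bx => i [_ []].
Qed.

Lemma Q_up : sq w setT <= eD + (1 + t) * (sq x Fx + sq y Fy) + 2 * E + 4 * e2.
Proof.
rewrite (sq4 setT Sx Sy lw).
have := T1b setT; have := T2b setT; have := T3b setT; have := T4b setT.
rewrite !setTI. lra.
Qed.


Let Ex A : A `<=` Fx -> sq x A <= (1 + t) * sq w A + E.
Proof.
move=> AF; apply: le_trans (sq_tri (p:=x) (S:=A) lw ly t0 (fun i _ => nx i)) _.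
rewrite lerD2l /E ler_wpM2l //; first by rewrite addr_ge0 // invr_ge0 ltW.
by apply: by_ => i /AF [].
Qed.

Let Ey A : A `<=` Fy -> sq y A <= (1 + t) * sq w A + E.
Proof.
move=> AF; apply: le_trans (sq_tri (p:=y) (S:=A) lw lx t0 (fun i _ => ny i)) _.
rewrite lerD2l /E ler_wpM2l //; first by rewrite addr_ge0 // invr_ge0 ltW.
by apply: bx => i /AF [].
Qed.

Lemma Q_lo : sq x Fx + sq y Fy <= (1 + t) * sq w setT + 2 * E.
Proof.
have h1 := Ex (@subset_refl _ Fx); have h2 := Ey (@subset_refl _ Fy).
rewrite (sq4 setT Sx Sy lw) !setTI.
have -> : ~` Sx `&` Sy = Fy by rewrite /Fy setIC.
have := sq_ge0 w (Sx `&` Sy); have := sq_ge0 w (~` Sx `&` ~` Sy).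
rewrite -/Fx. have := ltW t0. nra.
Qed.

Lemma A_up (gx gy : R) (a : set W) :
  (forall i j, Fx i -> Fy j -> (pcol c i j).1 <> i0) -> T0_family i0 c a ->
  sq x (a `&` Fx) <= gx -> sq y (a `&` Fy) <= gy ->
  sq w a <= eD + (1 + t) * Num.max gx gy + E + 4 * e2.
Proof.
move=> Hc [_ Ha] hx hy.
rewrite (sq4 a Sx Sy lw).
have h1 := T1b a; have h2 := T2b a; have h3 := T3b a; have h4 := T4b a.
have tt0 : 0 <= 1 + t by rewrite addr_ge0 // ltW.
have mx : gx <= Num.max gx gy by rewrite le_max lexx.
have my : gy <= Num.max gx gy by rewrite le_max lexx orbT.
have E0' : 0 <= E by rewrite /E mulr_ge0 // addr_ge0 // invr_ge0 ltW.
case: (pselect (exists i, (a `&` Fx) i)) => [[i [ai Fxi]]|nx'].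
  have z : sq w (a `&` ~` Sx `&` Sy) = 0.
    apply: sq_zero => j [[aj nSxj] Syj]; exfalso.
    have Fyj : Fy j by split.
    apply: (Hc i j Fxi Fyj); apply: Ha => //.
    by move=> e; case: Fxi => _; rewrite e; case: Fyj.
  rewrite z; have := sq_ge0 x (a `&` Fx). nra.
have z : sq w (a `&` Sx `&` ~` Sy) = 0.
  by apply: sq_zero => i [[ai Sxi] nSyi]; exfalso; apply: nx'; exists i.
rewrite z; have := sq_ge0 y (a `&` Fy). nra.
Qed.

Lemma pcol_sym (K : Type) (cc : W -> W -> K) (p q : W) : p <> q -> pcol cc p q = pcol cc q p.
Proof.
move=> pq; rewrite /pcol; by case: (ltgtP p q).
Qed.

Lemma A_lo_mem (a1 a2 : set W) :
  (forall i j, Fx i -> Fy j -> (pcol c i j).1 = i0) ->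
  T0_family i0 c a1 -> T0_family i0 c a2 -> T0_family i0 c ((a1 `&` Fx) `|` (a2 `&` Fy)).
Proof.
move=> Hc [f1 H1] [f2 H2]; split.
  by rewrite finite_setU; split; apply: finite_setIl.
move=> p q [[p1 pF]|[p2 pF]] [[q1 qF]|[q2 qF]] pq.
- exact: H1.
- exact: Hc.
- by rewrite pcol_sym //; apply: Hc.
- exact: H2.
Qed.

Lemma A_lo (a1 a2 : set W) :
  sq x (a1 `&` Fx) + sq y (a2 `&` Fy) <= (1 + t) * sq w ((a1 `&` Fx) `|` (a2 `&` Fy)) + 2 * E.
Proof.
rewrite (sq_split _ Sx lw).
have -> : ((a1 `&` Fx) `|` (a2 `&` Fy)) `&` Sx = a1 `&` Fx.
  apply/seteqP; split => i /=.
    by move=> [[[a1i Fxi]|[a2i [Syi nSxi]]] Sxi]; [split|case: nSxi].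
  by move=> [a1i [Sxi Syi]]; split => //; left.
have -> : ((a1 `&` Fx) `|` (a2 `&` Fy)) `&` ~` Sx = a2 `&` Fy.
  apply/seteqP; split => i /=.
    by move=> [[[a1i [Sxi nSyi]]|[a2i Fyi]] nSxi]; [case: nSxi|split].
  by move=> [a2i [Syi Sxi]]; split => //; right.
have h1 := Ex (@subIsetr _ a1 Fx); have h2 := Ey (@subIsetr _ a2 Fy).
lra.
Qed.

End Pair.


Local Close Scope classical_set_scope.


Lemma sq_ge_le (R : realType) (a b : R) : 0 <= a -> 0 <= b -> b ^+ 2 <= a ^+ 2 -> b <= a.
Proof. by move=> a0 b0; rewrite ler_pXn2r // ?nnegrE. Qed.

Lemma sq_le_mono (R : realType) (a b : R) : 0 <= a -> a <= b -> a ^+ 2 <= b ^+ 2.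
Proof. by move=> a0 ab; rewrite ler_pXn2r // ?nnegrE //; apply: le_trans ab. Qed.

Lemma ar1 (R : realType) (m r η ρ g : R) :
  0 < r -> r <= m -> r <= 1 -> η = r ^+ 2 / 1000 -> 0 < ρ -> ρ <= η -> m - ρ <= g ->
  [/\ 0 < g, ρ <= g / 999, η <= g ^+ 2 / 998, η <= r / 1000 & m <= 1000 / 999 * g].
Proof.
move=> r0 rm r1 eta rho0 rhoeta gm.
have r2 : r ^+ 2 <= r by rewrite expr2 ger_pMr // ltW.
have eta_r : η <= r / 1000 by rewrite eta; lra.
have g0 : 999 / 1000 * m <= g by lra.
have eta_m2 : η <= m ^+ 2 / 1000.
  by rewrite eta; have := sq_le_mono (ltW r0) rm; lra.
have mg2 : m ^+ 2 <= (1000 / 999 * g) ^+ 2 by apply: sq_le_mono; lra.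
have ee : (1000 / 999 * g) ^+ 2 = (1000 / 999 * (1000 / 999)) * g ^+ 2 by rewrite exprMn expr2.
rewrite ee in mg2.
split; lra.
Qed.

Lemma arA0 (R : realType) (t η ρ g A0 P0 : R) :
  0 < g -> ρ <= g / 999 -> 0 <= ρ -> η <= g ^+ 2 / 998 -> 0 < t -> t <= 1 / 1000 -> 0 <= A0 ->
  2 * (g - ρ) ^+ 2 - 4 * η <= (1 + t) * P0 -> P0 <= A0 ^+ 2 -> 135 / 100 * g <= A0.
Proof.
move=> g0 rg r0 eg t0 t1 A00 HP0 P0A.
apply: sq_ge_le => //; first by lra.
have h : (998 / 999 * g) ^+ 2 <= (g - ρ) ^+ 2 by apply: sq_le_mono; lra.
have ee : (998 / 999 * g) ^+ 2 = (998 / 999 * (998 / 999)) * g ^+ 2 by rewrite exprMn expr2.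
rewrite ee in h.
have h2 : t * A0 ^+ 2 <= 1 / 1000 * A0 ^+ 2 by apply: ler_wpM2r => //; exact: sqr_ge0.
have h3 : (1 + t) * P0 <= (1 + t) * A0 ^+ 2 by apply: ler_wpM2l => //; lra.
have -> : (135 / 100 * g) ^+ 2 = (135 / 100 * (135 / 100)) * g ^+ 2 by rewrite exprMn expr2.
have g20 : 0 <= g ^+ 2 by exact: sqr_ge0.
lra.
Qed.

Lemma arA1 (R : realType) (t η ρ g A1 : R) :
  0 < g -> ρ <= g / 999 -> 0 <= ρ -> η <= g ^+ 2 / 998 -> 0 < t -> t <= 1 / 1000 -> 0 <= A1 ->
  A1 ^+ 2 <= (1 + t) * (g + ρ) ^+ 2 + 7 * η -> A1 <= 105 / 100 * g.
Proof.
move=> g0 rg r0 eg t0 t1 A10 HA1.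
apply: sq_ge_le => //; first by lra.
have h : (g + ρ) ^+ 2 <= (1000 / 999 * g) ^+ 2 by apply: sq_le_mono; lra.
have ee : (1000 / 999 * g) ^+ 2 = (1000 / 999 * (1000 / 999)) * g ^+ 2 by rewrite exprMn expr2.
rewrite ee in h.
have h2 : t * (g + ρ) ^+ 2 <= 1 / 1000 * (g + ρ) ^+ 2 by apply: ler_wpM2r => //; exact: sqr_ge0.
have -> : (105 / 100 * g) ^+ 2 = (105 / 100 * (105 / 100)) * g ^+ 2 by rewrite exprMn expr2.
have g20 : 0 <= g ^+ 2 by exact: sqr_ge0.
lra.
Qed.

Lemma arQ (R : realType) (δ m r t η ρ g Q0 Q1 Tc B2 : R) :
  0 < δ -> r <= m * δ -> m <= 1000 / 999 * g -> η <= r / 1000 -> 0 < ρ -> ρ <= η ->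
  0 < t -> t <= 1 / 1000 -> t * B2 <= r / 1000 -> Tc <= B2 -> 0 <= Tc -> 0 <= Q0 -> 0 <= η ->
  2 * Tc - 4 * η <= (1 + t) * Q0 ->
  Q1 <= (1 + t) * (2 * Tc + 2 * ρ) + 9 * η -> Q1 - Q0 <= 2 / 100 * (g * δ).
Proof.
move=> d0 rmd mg er rho0 rhoe t0 t1 tB TcB Tc0 Q00 e0 HQ0 HQ1.
have h2 : t * Tc <= r / 1000 by apply: le_trans tB; apply: ler_wpM2l => //; lra.
have h3 : t * ρ <= ρ / 1000 by rewrite mulrC; apply: le_trans (ler_wpM2l (ltW rho0) t1) _; lra.
have h5 : (2 * Tc - 4 * η) * (1 - t) <= (1 + t) * Q0 * (1 - t).
  by apply: ler_wpM2r => //; lra.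
have h6 : (1 + t) * Q0 * (1 - t) <= Q0.
  have -> : (1 + t) * Q0 * (1 - t) = Q0 - t * t * Q0 by ring.
  have : 0 <= t * t * Q0 by apply: mulr_ge0 => //; apply: mulr_ge0; lra.
  lra.
have h7 : 0 <= t * η by apply: mulr_ge0; lra.
have rg : r <= (g * δ) * (1000 / 999).
  have : m * δ <= (1000 / 999 * g) * δ by apply: ler_wpM2r; lra.
  lra.
move: h5 h6; rewrite !mulrBr !mulrBl !mulr1 => h5 h6.
lra.
Qed.

Lemma arL (R : realType) (δ g L0 L1 A0 A1 Q0 Q1 : R) :
  0 < δ -> 0 <= g -> δ = L0 + A0 -> δ = L1 + A1 -> 0 <= A0 -> A0 <= L0 -> 0 <= A1 -> A1 <= L1 ->
  L0 ^+ 2 = Q0 -> L1 ^+ 2 = Q1 -> Q1 - Q0 <= 2 / 100 * (g * δ) -> L1 - L0 <= 2 / 100 * g.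
Proof.
move=> d0 g0 dL0 dL1 A00 A0L A10 A1L Q0E Q1E s3.
case: (lerP L1 L0) => h; first by lra.
have hL : δ <= L0 + L1 by lra.
have s4 : δ * (L1 - L0) <= Q1 - Q0.
  rewrite -Q0E -Q1E.
  have -> : L1 ^+ 2 - L0 ^+ 2 = (L1 + L0) * (L1 - L0) by ring.
  apply: ler_wpM2r; lra.
have : δ * (L1 - L0) <= δ * (2 / 100 * g) by lra.
by rewrite ler_pM2l.
Qed.


Lemma arParams (R : realType) (m δ B2 r η t e2 : R) : 0 < m -> m <= 1 -> 0 < δ -> 0 <= B2 ->
  r = m * δ / (1 + δ) -> η = r ^+ 2 / 1000 ->
  t = r / (1000 * (B2 + 1)) -> e2 = t * η ->
  [/\ 0 < r, r <= m * δ, r <= m, r <= 1 & r <= δ] /\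
  [/\ 0 < η, η <= 1, η <= δ ^+ 2 / 1000, 0 < t & t <= 1 / 1000] /\
  [/\ t * B2 <= r / 1000, 0 < e2, e2 <= η & (1 + t^-1) * e2 <= 2 * η].
Proof.
move=> m0 m1 d0 B0 hr he ht he2.
have d1 : 0 < 1 + δ by lra.
have md0 : 0 < m * δ by apply: mulr_gt0.
have rmd : r <= m * δ by rewrite hr ler_pdivrMr //; nra.
have rm : r <= m by rewrite hr ler_pdivrMr //; nra.
have rd : r <= δ by rewrite hr ler_pdivrMr //; nra.
have r0 : 0 < r by rewrite hr divr_gt0 // mulr_gt0.
have r1 : r <= 1 by lra.
have r2 : r ^+ 2 <= r by rewrite expr2 ger_pMr.
have rd2 : r ^+ 2 <= δ ^+ 2 by rewrite ler_pXn2r // ?nnegrE ltW.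
have e0 : 0 < η by rewrite he; apply: divr_gt0; [exact: exprn_gt0 | rewrite ltr0n].
have B1 : 0 < 1000 * (B2 + 1) by apply: mulr_gt0; lra.
have t0 : 0 < t by rewrite ht divr_gt0.
have tB : t * (1000 * (B2 + 1)) = r by rewrite ht (divfK (lt0r_neq0 B1)).
have t1 : t <= 1 / 1000.
  have : t * 1000 <= t * (1000 * (B2 + 1)) by apply: ler_wpM2l; [exact: ltW | nra].
  rewrite tB; lra.
have tB2 : t * B2 <= r / 1000.
  have -> : t * B2 = r / 1000 - t by rewrite -tB; field.
  lra.
have te : e2 <= η by rewrite he2 ger_pMl //; lra.
have E : (1 + t^-1) * e2 = t * η + η by rewrite he2; field; rewrite gt_eqF.
split; first by split.
split; first by split => //; rewrite he; lra.
split => //; first by rewrite he2 mulr_gt0.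
rewrite E; have : t * η <= η by rewrite ger_pMl //; lra.
lra.
Qed.

Lemma arRho (R : realType) (η n ρ : R) : 0 < η -> η <= 1 -> 0 <= n ->
  ρ = η / (n + 1) -> [/\ 0 < ρ, ρ <= η & n * ρ ^+ 2 <= η].
Proof.
move=> e0 e1 n0 hr.
have n1 : 0 < n + 1 by lra.
have r0 : 0 < ρ by rewrite hr divr_gt0.
have nr : (n + 1) * ρ = η by rewrite hr mulrC divfK // gt_eqF.
have re : ρ <= η by nra.
split => //.
have : n * ρ <= η by nra.
rewrite expr2 mulrA => h.
have : n * ρ * ρ <= η * ρ by rewrite ler_pM2r.
nra.
Qed.

Lemma arT (R : realType) (δ t η ρ Tc Q Tx Ty E e2 : R) :
  0 < δ -> 0 < t -> t <= 1 / 1000 -> 0 <= ρ -> ρ <= η -> η <= δ ^+ 2 / 1000 ->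
  E <= 2 * η -> e2 <= η -> δ ^+ 2 / 4 <= Q ->
  Q <= η + (1 + t) * (Tx + Ty) + 2 * E + 4 * e2 -> Tx < Tc + ρ -> Ty < Tc + ρ ->
  δ ^+ 2 / 64 < Tc.
Proof.
move=> d0 t0 t1 r0 re ed E2 e2e HQ HQ2 hx hy.
rewrite ltNge; apply/negP => hT.
have h1 : (1 + t) * (Tx + Ty) <= (1 + t) * (2 * (δ ^+ 2 / 64) + 2 * ρ).
  by apply: ler_wpM2l; lra.
have h2 : t * (2 * (δ ^+ 2 / 64) + 2 * ρ) <= 1 / 1000 * (2 * (δ ^+ 2 / 64) + 2 * ρ).
  apply: ler_wpM2r => //; have := sqr_ge0 δ; lra.
have := sqr_ge0 δ; have : 0 < δ ^+ 2 by rewrite exprn_gt0.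
lra.
Qed.


Section Ar3.
Variable R : realType.
Implicit Types a b c d e f g h u v x y z : R.

Lemma sq_mono a b : 0 <= a -> a <= b -> a ^+ 2 <= b ^+ 2.
Proof. by move=> a0 ab; rewrite ler_pXn2r // ?nnegrE //; apply: le_trans ab. Qed.

Lemma lt_sqrt_sq a b : 0 <= a -> 0 <= b -> a < Num.sqrt b -> a ^+ 2 <= b.
Proof.
move=> a0 b0 h; rewrite -(sqr_sqrtr b0); apply: sq_mono => //; exact: ltW.
Qed.

Lemma sqrt_le_sq a b : 0 <= b -> Num.sqrt b <= a -> b <= a ^+ 2.
Proof. by move=> b0 h; rewrite -(sqr_sqrtr b0); apply: sq_mono => //; exact: sqrtr_ge0. Qed.

Lemma le_sqrt_sq a b : 0 <= a -> 0 <= b -> a <= Num.sqrt b -> a ^+ 2 <= b.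
Proof. by move=> a0 b0 h; rewrite -(sqr_sqrtr b0); apply: sq_mono. Qed.

Lemma arHalf (δ L A Q : R) : δ = L + A -> A <= L -> L ^+ 2 = Q -> 0 < δ -> δ ^+ 2 / 4 <= Q.
Proof.
move=> dLA AL LQ d0; rewrite -LQ.
have -> : δ ^+ 2 / 4 = (δ / 2) ^+ 2 by field.
by apply: sq_mono; lra.
Qed.

Lemma arSq (δ L A Q : R) : L + A = δ -> 0 <= A -> L = Num.sqrt Q -> 0 <= Q -> Q <= δ ^+ 2.
Proof.
move=> dLA A0 LQ Q0; rewrite -(sqr_sqrtr Q0) -LQ; apply: sq_mono.
  by rewrite LQ sqrtr_ge0.
lra.
Qed.

Lemma arB (q s0 δ : R) : 0 <= s0 -> q <= (1 + 1) * s0 + (1 + 1^-1) * (δ ^+ 2) ->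
  q <= 2 * s0 + 2 * δ ^+ 2.
Proof. by rewrite invr1 => _ h; lra. Qed.

Lemma arB0 (s0 δ : R) : 0 <= s0 -> s0 <= 2 * s0 + 2 * δ ^+ 2.
Proof. by move=> s; have := sqr_ge0 δ; lra. Qed.

Lemma arP0 (g ρ G1 G2 s1 s2 t P0 E η : R) :
  0 <= g - ρ -> g <= G1 -> g <= G2 -> 0 <= G1 - ρ -> 0 <= G2 - ρ ->
  (G1 - ρ) ^+ 2 <= s1 -> (G2 - ρ) ^+ 2 <= s2 -> s1 + s2 <= (1 + t) * P0 + 2 * E ->
  E <= 2 * η -> 2 * (g - ρ) ^+ 2 - 4 * η <= (1 + t) * P0.
Proof.
move=> g0 h1 h2 h10 h20 hs1 hs2 hs E2.
have : (g - ρ) ^+ 2 <= (G1 - ρ) ^+ 2 by apply: sq_mono => //; lra.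
have : (g - ρ) ^+ 2 <= (G2 - ρ) ^+ 2 by apply: sq_mono => //; lra.
lra.
Qed.

Lemma arQ0 (Tc Tx Ty t Q0 E η : R) : Tc <= Tx -> Tc <= Ty -> Tx + Ty <= (1 + t) * Q0 + 2 * E ->
  E <= 2 * η -> 2 * Tc - 4 * η <= (1 + t) * Q0.
Proof. move=> *; lra. Qed.

Lemma arQ1 (Tc Tx Ty t Q1 E η ρ e2 : R) : 0 <= t -> Tx < Tc + ρ -> Ty < Tc + ρ ->
  Q1 <= η + (1 + t) * (Tx + Ty) + 2 * E + 4 * e2 -> E <= 2 * η -> e2 <= η ->
  Q1 <= (1 + t) * (2 * Tc + 2 * ρ) + 9 * η.
Proof.
move=> t0 hx hy hQ E2 e2e.
have : (1 + t) * (Tx + Ty) <= (1 + t) * (2 * Tc + 2 * ρ) by apply: ler_wpM2l; lra.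
lra.
Qed.

Lemma arA1b (A1 Gx Gy g ρ t E η e2 : R) : 0 <= t -> 0 <= Gx -> 0 <= Gy -> Gx < g + ρ -> Gy < g + ρ ->
  A1 ^+ 2 <= η + (1 + t) * Num.max (Gx ^+ 2) (Gy ^+ 2) + E + 4 * e2 ->
  E <= 2 * η -> e2 <= η -> A1 ^+ 2 <= (1 + t) * (g + ρ) ^+ 2 + 7 * η.
Proof.
move=> t0 gx gy hx hy hA E2 e2e.
have hm : Num.max (Gx ^+ 2) (Gy ^+ 2) <= (g + ρ) ^+ 2.
  by rewrite ge_max; apply/andP; split; apply: sq_mono => //; apply: ltW.
have : (1 + t) * Num.max (Gx ^+ 2) (Gy ^+ 2) <= (1 + t) * (g + ρ) ^+ 2.
  by apply: ler_wpM2l => //; lra.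
lra.
Qed.

Lemma arFin (δ g L0 L1 A0 A1 : R) : 0 < g -> δ = L0 + A0 -> δ = L1 + A1 ->
  135 / 100 * g <= A0 -> A1 <= 105 / 100 * g -> L1 - L0 <= 2 / 100 * g -> False.
Proof. move=> *; lra. Qed.

Lemma arCT (Tc Tz θ : R) : θ < Tc -> Tc <= Tz -> Tz <= θ -> False.
Proof. move=> *; lra. Qed.

Lemma arGm (m ρ G g : R) : m <= G -> G < g + ρ -> m - ρ <= g.
Proof. move=> *; lra. Qed.

End Ar3.


Local Open Scope classical_set_scope.
Local Open Scope ring_scope.


Section Misc.
Variables (R : realType) (T : choiceType).

Lemma inv_mono (k1 k2 : nat) : (k1 <= k2)%N -> (k2.+1%:R : R)^-1 <= (k1.+1%:R)^-1.
Proof. by move=> h; rewrite lef_pV2 ?posrE ?ltr0Sn // ler_nat ltnS. Qed.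

Lemma list_lb (y : T -> R) (s : seq T) :
  exists k : nat, forall i, i \in s -> y i != 0 -> (k.+1%:R)^-1 <= `|y i|.
Proof.
elim: s => [|a s [k1 IH]]; first by exists 0%N.
have [ya|ya] := eqVneq (y a) 0.
  exists k1 => i; rewrite inE => /orP [/eqP ->|]; first by rewrite ya eqxx.
  exact: IH.
have [k2 hk2] : exists k, 0 + k.+1%:R^-1 < `|y a| by apply: ltr_add_invr; rewrite normr_gt0.
exists (maxn k1 k2) => i; rewrite inE => /orP [/eqP ->|iS yi].
  move=> _; apply: le_trans (ltW hk2); rewrite add0r; apply: inv_mono; exact: leq_maxr.
by apply: le_trans (IH i iS yi); apply: inv_mono; exact: leq_maxl.
Qed.

Lemma small_sq (y : T -> R) (θ : R) : @l2 R T y -> 0 < θ ->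
  exists k : nat, sq y [set i | `|y i| < (k.+1%:R)^-1] <= θ.
Proof.
move=> ly t0; have [s hs] := sq_approx ly t0.
have [k hk] := list_lb y s; exists k.
rewrite (sq_split _ [set` s] ly) sq_zero ?add0r.
  by apply: le_trans hs; apply: sq_sub => // i [].
move=> i [/= yi si]; apply/eqP; apply: contraTT yi => yn0.
by rewrite -leNgt; apply: hk.
Qed.

Lemma floor_bounds (a ρ : R) : 0 < ρ ->
  (Num.floor (a / ρ))%:~R * ρ <= a /\ a < (Num.floor (a / ρ))%:~R * ρ + ρ.
Proof.
move=> r0; have /andP [h1 h2] := mem_rg1_floor (a / ρ).
split.
  by rewrite -ler_pdivlMr.
by rewrite -[X in _ < _ + X]mul1r -mulrDl -ltr_pdivrMr.
Qed.

Lemma floor_close (a b ρ : R) : 0 < ρ -> Num.floor (a / ρ) = Num.floor (b / ρ) -> `|a - b| < ρ.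
Proof.
move=> r0 e; have [a1 a2] := floor_bounds a r0; have [b1 b2] := floor_bounds b r0.
rewrite e in a1 a2; rewrite ltr_norml; apply/andP; split; lra.
Qed.


Lemma normA_Gsup (F : set (set T)) (x : T -> R) : normA F x = Gsup F (sq x).
Proof. by []. Qed.

Lemma norm2_sq (x : T -> R) : norm2 x = Num.sqrt (sq x setT).
Proof. by []. Qed.

Lemma normA_ge (F : set (set T)) (x : T -> R) A : @l2 R T x -> F A -> Num.sqrt (sq x A) <= normA F x.
Proof.
move=> lx FA; rewrite normA_Gsup; apply: (@Gsup_ge _ _ _ _ (sq x setT)) => // B _.
exact: sq_sub.
Qed.

Lemma normA_le (F : set (set T)) (x : T -> R) b : F set0 -> (forall A, F A -> sq x A <= b) ->
  normA F x <= Num.sqrt b.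
Proof. by move=> F0 H; rewrite normA_Gsup; apply: (@Gsup_le _ _ _ _ b set0). Qed.

Lemma normA_le2 (F : set (set T)) (x : T -> R) : @l2 R T x -> F set0 -> normA F x <= norm2 x.
Proof. by move=> lx F0; rewrite norm2_sq; apply: normA_le => // A _; exact: sq_sub. Qed.

Lemma normA_ge0 (F : set (set T)) (x : T -> R) : @l2 R T x -> F set0 -> 0 <= normA F x.
Proof. by move=> lx F0; apply: le_trans (normA_ge lx F0); exact: sqrtr_ge0. Qed.

End Misc.


Lemma arB2 (R : realType) (q a b δ : R) : 0 <= b -> a <= δ ^+ 2 ->
  q <= (1 + 1) * a + (1 + 1^-1) * b -> q <= 2 * b + 2 * δ ^+ 2.
Proof. by rewrite invr1 => *; lra. Qed.

Lemma arNN (R : realType) (g ρ G : R) : 0 < g -> ρ <= g / 999 -> g <= G -> 0 <= G - ρ.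
Proof. by move=> *; lra. Qed.

Unset Implicit Arguments. Set Strict Implicit.
Theorem proposition4p5 (R : realType) (d : Order.disp_t) (W : orderType d)
  (I J : Type) (i0 i1 : I) (c : W -> W -> I * J) :
  is_omega1 W -> i0 <> i1 -> inhabited J ->
  strong_T_coloring i0 i1 c ->
  ~ exists Y : set (W -> R),
      Y `<=` @l2 R W /\ ~ countable Y /\
      exists delta : R, 0 < delta /\
        forall y y', Y y -> Y y' -> y <> y' ->
          norm2A (T0_family i0 c) (y \- y') = delta.
Proof.
move=> HW i01 _ [_ Hs] [Y [YL2 [cY [δ [d0 Heq]]]]].
pose Fam := T0_family i0 c.
have F0 : Fam set0 by split => // x y [].
have F1 i : Fam [set i] by split; [exact: finite_set1 | move=> x y -> ->].
have lB y y' : Y y -> Y y' -> @l2 R W (y \- y').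
  by move=> Yy Yy'; apply: l2B; [exact: YL2|exact: YL2].
have Nd y y' : Y y -> Y y' -> y <> y' -> norm2 (y \- y') + normA Fam (y \- y') = δ.
  by move=> Yy Yy' yy; exact: (Heq y y' Yy Yy' yy).
have Lge y y' : Y y -> Y y' -> y <> y' -> δ ^+ 2 / 4 <= sq (y \- y') setT.
  move=> Yy Yy' yy; apply: (@arHalf _ δ (norm2 (y \- y')) (normA Fam (y \- y'))).
  - by rewrite Nd.
  - exact: normA_le2 (lB _ _ Yy Yy') F0.
  - by rewrite norm2_sq sqr_sqrtr // sq_ge0.
  - exact: d0.
have [y0 Yy0] := uncount_ex cY.
pose B2 := 2 * sq y0 setT + 2 * δ ^+ 2.
have B20 : 0 <= B2 by rewrite addr_ge0 // mulr_ge0 // ?sq_ge0 ?sqr_ge0.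
have HB y : Y y -> sq y setT <= B2.
  move=> Yy; case: (pselect (y = y0)) => [->|yy0]; first by apply: arB0; exact: sq_ge0.
  have hn : sq (y \- y0) setT <= δ ^+ 2.
    apply: (@arSq _ δ (norm2 (y \- y0)) (normA Fam (y \- y0))) => //.
    - exact: Nd.
    - exact: normA_ge0 (lB _ _ Yy Yy0) F0.
    - exact: sq_ge0.
  apply: arB2 (sq_ge0 _ _) hn _.
  apply: (@sq_tri _ _ _ y (y \- y0) y0 setT 1 (lB _ _ Yy Yy0) (YL2 _ Yy0) ltr01).
  by move=> i _; have := ler_normD (y i - y0 i) (y0 i); rewrite subrK.
pose θ := δ ^+ 2 / 64.
have θ0 : 0 < θ by apply: divr_gt0; [exact: exprn_gt0 | rewrite ltr0n].
have [k [_ cU1]] := @pigeon _ _ setT Y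
  (fun k : nat => [set y : W -> R | sq y [set i | `|y i| < (k.+1%:R)^-1] <= θ])
  (countableP _) cY (fun y Yy => ltac:(
    have [k hk] := small_sq (YL2 _ Yy) θ0; by exists k)).
pose m : R := (k.+1%:R)^-1.
have m0 : 0 < m by rewrite invr_gt0 ltr0Sn.
have m1 : m <= 1 by have := @inv_mono R _ _ (leq0n k); rewrite invr1.
pose r := m * δ / (1 + δ).
pose η := r ^+ 2 / 1000.
pose t := r / (1000 * (B2 + 1)).
pose e2 := t * η.
have P := @arParams R m δ B2 r η t e2 m0 m1 d0 B20 erefl erefl erefl erefl.
case: P => [[r0 rmd rm r1 rd] [[e0 e1 ed t0 t1] [tB2 e20 e2e E2]]].
have HS : forall y : W -> R, exists s : seq W, @l2 R W y -> sq y (~` [set` s]) <= e2.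
  move=> y; case: (pselect (@l2 R W y)) => ly; last by exists [::].
  by have [s hs] := sq_approx ly e20; exists s.
pose Sq y := undup (proj1_sig (cid (HS y))).
have HSq y : @l2 R W y -> sq y (~` [set` Sq y]) <= e2.
  move=> ly; have := proj2_sig (cid (HS y)) ly.
  suff -> : [set` Sq y] = [set` proj1_sig (cid (HS y))] by [].
  by apply/seteqP; split => i /=; rewrite mem_undup.
have [n cU2] := pigeon_fun (fun y => size (Sq y)) cU1.
have [D [U3 [U32 [cU3 HD]]]] := delta HW (n := n) (S := Sq) cU2
  (fun x Ux => conj (undup_uniq _) (eq_leq (proj2 Ux))).
have U3Y x : U3 x -> Y x by move=> /U32 [[]].
have U3k x : U3 x -> sq x [set i | `|x i| < m] <= θ by move=> /U32 [[]].
have [x3 [y3 [Ux3 [Uy3 xy3]]]] := uncount_two cU3.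
have finD : finite_set D.
  by rewrite -(HD x3 y3 Ux3 Uy3 xy3); apply: finite_setIl.
have [sD eD] := (proj1 (finite_seqP D)) finD.
pose ρ := η / ((size sD)%:R + 1).
have [rho0 rhoe hsD] := @arRho R η (size sD)%:R ρ e0 e1 (ler0n _ _) erefl.
pose Fz z := [set` Sq z] `\` D.
pose Tz z := sq z (Fz z).
pose Gz z := Gsup Fam (fun a => sq z (a `&` Fz z)).
pose dat z := (map (fun i => Num.floor (z i / ρ)) sD, Num.floor (Tz z / ρ), Num.floor (Gz z / ρ)).
have [dd cU4] := pigeon_fun dat cU3.
pose U4 := U3 `&` [set z | dat z = dd].
pose Tc := (dd.1.2)%:~R * ρ.
pose gc := (dd.2)%:~R * ρ.
have TzB z : U4 z -> Tc <= Tz z /\ Tz z < Tc + ρ.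
  by move=> [_ e]; have := floor_bounds (Tz z) rho0; rewrite /Tc -e.
have GzB z : U4 z -> gc <= Gz z /\ Gz z < gc + ρ.
  by move=> [_ e]; have := floor_bounds (Gz z) rho0; rewrite /gc -e.
have U4Y z : U4 z -> Y z by move=> [/U3Y].
have U4l z : U4 z -> @l2 R W z by move=> /U4Y /YL2.
have FxE x y : U4 x -> U4 y -> x <> y -> [set` Sq x] `&` ~` [set` Sq y] = Fz x.
  move=> [Ux _] [Uy _] xy; apply/seteqP; split => i /=.
    move=> [ix niy]; split => //; rewrite -(HD x y Ux Uy xy) => -[_ iy]; exact: niy iy.
  by move=> [ix nD]; split => // iy; apply: nD; rewrite -(HD x y Ux Uy xy).
have root x y : U4 x -> U4 y -> sq (x \- y) D <= η.
  move=> [Ux ex] [Uy ey]; apply: le_trans hsD; rewrite eD.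
  apply: sq_seq; first by apply: l2B; [exact: YL2 (U3Y _ Ux)|exact: YL2 (U3Y _ Uy)].
  move=> i iD.
  have hm : map (fun i => Num.floor (x i / ρ)) sD = map (fun i => Num.floor (y i / ρ)) sD.
    exact: (congr1 (fun p => p.1.1) (etrans ex (esym ey))).
  have /(_ i iD) := proj2 (eq_in_map _ _ _) hm => /= hf.
  have := floor_close rho0 hf => hc.
  rewrite /= -real_normK ?num_real //; apply: sq_mono => //; exact: ltW.
pose E := (1 + t^-1) * e2.
have HSz z : U4 z -> sq z (~` [set` Sq z]) <= e2 by move=> /U4l; exact: HSq.
have HDz x y : U4 x -> U4 y -> x <> y -> [set` Sq x] `&` [set` Sq y] = D.
  by move=> [Ux _] [Uy _]; exact: HD.
have PB x y : U4 x -> U4 y -> x <> y ->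
  sq (x \- y) setT <= η + (1 + t) * (Tz x + Tz y) + 2 * E + 4 * e2 /\
  Tz x + Tz y <= (1 + t) * sq (x \- y) setT + 2 * E.
  move=> Ux Uy xy; split.
    have := Q_up (U4l _ Ux) (U4l _ Uy) t0 (HSz _ Ux) (HSz _ Uy) (HDz _ _ Ux Uy xy) (root _ _ Ux Uy).
    by rewrite (FxE _ _ Ux Uy xy) (FxE _ _ Uy Ux (nesym xy)).
  have := Q_lo (U4l _ Ux) (U4l _ Uy) t0 (HSz _ Ux) (HSz _ Uy).
  by rewrite (FxE _ _ Ux Uy xy) (FxE _ _ Uy Ux (nesym xy)).
have [x4 [y4 [U4x [U4y xy4]]]] := uncount_two cU4.
have Tcθ : θ < Tc.
  have [h1 _] := PB _ _ U4x U4y xy4.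
  exact: (arT d0 t0 t1 (ltW rho0) rhoe ed E2 e2e (Lge _ _ (U4Y _ U4x) (U4Y _ U4y) xy4) h1
    (TzB _ U4x).2 (TzB _ U4y).2).
have big z : U4 z -> exists i, Fz z i /\ m <= `|z i|.
  move=> Uz; apply: contra_notP (@arCT _ Tc (Tz z) θ Tcθ (TzB _ Uz).1) => nb.
  apply: le_trans (U3k _ Uz.1); apply: sq_sub (U4l _ Uz) _ => i Fi /=.
  by rewrite ltNge; apply/negP => h; apply: nb; exists i.
have Gb z : U4 z -> forall a, Fam a -> sq z (a `&` Fz z) <= sq z setT.
  by move=> Uz a _; apply: sq_sub (U4l _ Uz) _.
have Gm z : U4 z -> m <= Gz z.
  move=> Uz; have [i [Fi mi]] := big z Uz; apply: le_trans mi _.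
  have := @Gsup_ge _ _ Fam (fun a => sq z (a `&` Fz z)) (sq z setT) [set i] (Gb z Uz) (F1 i).
  have -> : [set i] `&` Fz z = [set i].
    by apply/seteqP; split => j /=; [case|move=> ->].
  by rewrite sq_set1 sqrtr_sqr.
have gcm : m - ρ <= gc := arGm (Gm _ U4x) (GzB _ U4x).2.
have [g [Ug Hg]] := free HW (N := fun _ => set0) cU4 (fun _ => countable0 _).
have gne a b : a <> b -> g a <> g b.
  move=> ab; case: (ltgtP a b) => [h|h|e] //.
  - by move=> e; apply: (Hg _ _ h).1; rewrite e.
  - exact: (Hg _ _ h).1.
pose A a := Fz (g a).
have finA a : finite_set (A a).
  by apply: sub_finite_set (finite_seq (Sq (g a))); move=> i [].
have neA a : A a !=set0 by have [i [Fi _]] := big _ (Ug a); exists i.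
have disjA a b : a <> b -> A a `&` A b = set0.
  move=> ab; apply/seteqP; split => i // [[ia nDa] [ib _]]; apply: nDa.
  by rewrite -(HDz _ _ (Ug a) (Ug b) (gne _ _ ab)).
have [[xi [et [xiet c0]]] [xi' [et' [xiet' c1]]]] := Hs A finA neA disjA.
have colE a b (j : I) : c0_image c (A a) (A b) = [set j] ->
    forall p q, Fz (g a) p -> Fz (g b) q -> (pcol c p q).1 = j.
  move=> cab p q hp hq.
  have : c0_image c (A a) (A b) ((pcol c p q).1) by exists p => //; exists q.
  by rewrite cab.
have [g0 rg eg er mg] := ar1 r0 rm r1 (erefl η) rho0 rhoe gcm.
have gcr : 0 <= gc - ρ := arNN g0 rg (lexx gc).
have Gr z : U4 z -> 0 <= Gz z - ρ by move=> Uz; exact: arNN g0 rg (GzB _ Uz).1.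
have G0 z : U4 z -> 0 <= Gz z by move=> Uz; exact: le_trans (ltW g0) (GzB _ Uz).1.
have Tc0 : 0 <= Tc by apply: ltW; exact: lt_trans θ0 Tcθ.
have TcB : Tc <= B2.
  apply: le_trans (TzB _ U4x).1 _; apply: le_trans (HB _ (U4Y _ U4x)).
  by apply: sq_sub (U4l _ U4x) _.
have nxe : xi <> et by move=> e; move: xiet; rewrite e ltxx.
have Ux := Ug xi; have Uy := Ug et; have xy := gne _ _ nxe.
have col0 := colE _ _ _ c0.
have [a1 [Fa1 ha1]] := @Gsup_adh _ _ Fam (fun a => sq (g xi) (a `&` Fz (g xi))) (sq (g xi) setT) set0 ρ F0 (Gb _ Ux) rho0.
have [a2 [Fa2 ha2]] := @Gsup_adh _ _ Fam (fun a => sq (g et) (a `&` Fz (g et))) (sq (g et) setT) set0 ρ F0 (Gb _ Uy) rho0.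
have Fb : Fam ((a1 `&` Fz (g xi)) `|` (a2 `&` Fz (g et))).
  have := @A_lo_mem d W I J i0 c [set` Sq (g xi)] [set` Sq (g et)] a1 a2.
  rewrite (FxE _ _ Ux Uy xy) (FxE _ _ Uy Ux (nesym xy)); apply => //.
have hlo := A_lo (U4l _ Ux) (U4l _ Uy) t0 (HSz _ Ux) (HSz _ Uy) a1 a2.
rewrite (FxE _ _ Ux Uy xy) (FxE _ _ Uy Ux (nesym xy)) in hlo.
have lw0 := lB _ _ (U4Y _ Ux) (U4Y _ Uy).
have P0A := sqrt_le_sq (sq_ge0 _ _) (normA_ge lw0 Fb).
have hgx := lt_sqrt_sq (Gr _ Ux) (sq_ge0 _ _) ha1.
have hgy := lt_sqrt_sq (Gr _ Uy) (sq_ge0 _ _) ha2.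
have HP0 := arP0 gcr (GzB _ Ux).1 (GzB _ Uy).1 (Gr _ Ux) (Gr _ Uy) hgx hgy hlo E2.
have [_ hQlo] := PB _ _ Ux Uy xy.
have HQ0 := arQ0 (TzB _ Ux).1 (TzB _ Uy).1 hQlo E2.
have A0b := arA0 g0 rg (ltW rho0) eg t0 t1 (normA_ge0 lw0 F0) HP0 P0A.
have nxe' : xi' <> et' by move=> e; move: xiet'; rewrite e ltxx.
have Ux' := Ug xi'; have Uy' := Ug et'; have xy' := gne _ _ nxe'.
have col1 p q : Fz (g xi') p -> Fz (g et') q -> (pcol c p q).1 <> i0.
  by move=> hp hq; rewrite (colE _ _ _ c1 p q hp hq); exact: nesym.
have lw1 := lB _ _ (U4Y _ Ux') (U4Y _ Uy').
have hGx a : Fam a -> sq (g xi') (a `&` Fz (g xi')) <= Gz (g xi') ^+ 2.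
  by move=> Fa; apply: sqrt_le_sq (sq_ge0 _ _) (Gsup_ge (Gb _ Ux') Fa).
have hGy a : Fam a -> sq (g et') (a `&` Fz (g et')) <= Gz (g et') ^+ 2.
  by move=> Fa; apply: sqrt_le_sq (sq_ge0 _ _) (Gsup_ge (Gb _ Uy') Fa).
have hup a : Fam a -> sq (g xi' \- g et') a <=
    η + (1 + t) * Num.max (Gz (g xi') ^+ 2) (Gz (g et') ^+ 2) + E + 4 * e2.
  move=> Fa.
  have := @A_up R d W I J i0 c (g xi') (g et') [set` Sq (g xi')] [set` Sq (g et')] D t e2 η
    (U4l _ Ux') (U4l _ Uy') t0 (HSz _ Ux') (HSz _ Uy') (HDz _ _ Ux' Uy' xy') (root _ _ Ux' Uy')
    (Gz (g xi') ^+ 2) (Gz (g et') ^+ 2) a.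
  rewrite (FxE _ _ Ux' Uy' xy') (FxE _ _ Uy' Ux' (nesym xy')); apply => //.
  - exact: hGx.
  - exact: hGy.
have A1le := normA_le F0 hup.
have bnd0 := le_trans (sq_ge0 _ _) (hup _ F0).
have A10 := normA_ge0 lw1 F0.
have hA1sq := le_sqrt_sq A10 bnd0 A1le.
have HA1 := arA1b (ltW t0) (G0 _ Ux') (G0 _ Uy') (GzB _ Ux').2 (GzB _ Uy').2 hA1sq E2 e2e.
have A1b := arA1 g0 rg (ltW rho0) eg t0 t1 A10 HA1.
have [hQup _] := PB _ _ Ux' Uy' xy'.
have HQ1 := arQ1 (ltW t0) (TzB _ Ux').2 (TzB _ Uy').2 hQup E2 e2e.
have Qd := arQ d0 rmd mg er rho0 rhoe t0 t1 tB2 TcB Tc0 (sq_ge0 _ _) (ltW e0) HQ0 HQ1.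
have Q0E : norm2 (g xi \- g et) ^+ 2 = sq (g xi \- g et) setT by rewrite norm2_sq sqr_sqrtr // sq_ge0.
have Q1E : norm2 (g xi' \- g et') ^+ 2 = sq (g xi' \- g et') setT by rewrite norm2_sq sqr_sqrtr // sq_ge0.
have dL0 := esym (Nd _ _ (U4Y _ Ux) (U4Y _ Uy) xy).
have dL1 := esym (Nd _ _ (U4Y _ Ux') (U4Y _ Uy') xy').
have Ld := arL d0 (ltW g0) dL0 dL1 (normA_ge0 lw0 F0) (normA_le2 lw0 F0) A10 (normA_le2 lw1 F0) Q0E Q1E Qd.
exact: arFin g0 dL0 dL1 A0b A1b Ld.
Qed.
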